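(* For every integer $d\ge1$, the set of forms $f\in\Sigma^4_{2,4d}$ of $4$-length at most $4$ (i.e. $f=\sum_{i=1}^4 p_i^4$ with $p_i\in\mathbb{R}[x,y]_d$) is a full-dimensional semi-algebraic subset of $\mathbb{R}[x,y]_{4d}$, i.e. it has nonempty interior in $\mathbb{R}[x,y]_{4d}$.
   Context: $\mathbb{R}[x,y]_e$ denotes the space of real binary forms of degree $e$. $\Sigma^4_{2,4d}\subset\mathbb{R}[x,y]_{4d}$ is the cone of finite sums of fourth powers of forms in $\mathbb{R}[x,y]_d$; the $4$-length of $f\in\Sigma^4_{2,4d}$ is the minimal number of such summands. *)

(* Defs.v *)
From HB Require Import structures.
From mathcomp Require Import all_boot all_order all_algebra.
From mathcomp Require Import all_classical all_reals all_analysis.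
Import numFieldNormedType.Exports.
Set Implicit Arguments. Unset Strict Implicit. Unset Printing Implicit Defensive.
Import Order.TTheory GRing.Theory Num.Theory.
Local Open Scope ring_scope.
Local Open Scope classical_set_scope.

(* A real binary form of degree e, f = \sum_{k=0}^e c_k x^k y^(e-k), is
   represented by its coefficient vector c : 'rV[R]_(e.+1) (c 0 k = c_k).
   The space R[x,y]_e is thus identified with 'rV[R]_(e.+1), carrying its
   canonical (normed, finite-dimensional) topology. *)
Definition bform_eval (R : comNzRingType) (e : nat) (c : 'rV[R]_(e.+1)) (x y : R) : R :=
  \sum_(k < e.+1) c 0 k * x ^+ k * y ^+ (e - k).

(* Forms f in R[x,y]_{4d} of 4-length at most 4:
   f = p_1^4 + p_2^4 + p_3^4 + p_4^4 with p_i in R[x,y]_d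
   (equality as polynomials, equivalently as functions on R^2 since R is
   infinite). *)
Arguments bform_eval : clear implicits.
Definition len4_le4 (R : realType) (d : nat) : set 'rV[R]_((4 * d).+1) :=
  [set f | exists p : 'I_4 -> 'rV[R]_(d.+1),
     forall x y : R, bform_eval R (4 * d) f x y = \sum_(i < 4) (bform_eval R d (p i) x y) ^+ 4].
Arguments len4_le4 : clear implicits.

(* Main.v *)
Require Import Defs.
From HB Require Import structures.
From mathcomp Require Import all_boot all_order all_algebra.
From mathcomp Require Import all_classical all_reals all_analysis.
From mathcomp Require Import ring lra zify.
Import numFieldNormedType.Exports.
Import Order.TTheory GRing.Theory Num.Theory.
Local Open Scope ring_scope.
Local Open Scope classical_set_scope.
Set Implicit Arguments. Unset Strict Implicit. Unset Printing Implicit Defensive.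

Section L1.
Variable R : realType.
Implicit Types p q : {poly R}.

Definition l1 p := \sum_(i < size p) `|p`_i|.

Lemma l1_widen p m : (size p <= m)%N -> l1 p = \sum_(i < m) `|p`_i|.
Proof.
move=> hm; rewrite /l1 -(subnKC hm) big_split_ord /=.
rewrite [X in _ + X]big1 ?addr0 // => i _.
by rewrite nth_default ?normr0 // leq_addr.
Qed.

Lemma l1_ge0 p : 0 <= l1 p.
Proof. by apply: sumr_ge0 => i _. Qed.

Lemma l1_coef p i : `|p`_i| <= l1 p.
Proof.
case: (ltnP i (size p)) => hi; last by rewrite nth_default // normr0 l1_ge0.
rewrite /l1 (bigD1 (Ordinal hi)) //= lerDl.
by apply: sumr_ge0.
Qed.

Lemma l1D p q : l1 (p + q) <= l1 p + l1 q.
Proof.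
set m := maxn (size p) (size q).
rewrite (@l1_widen (p + q) m); last by rewrite (leq_trans (size_polyD _ _)).
rewrite (@l1_widen p m) ?leq_maxl // (@l1_widen q m) ?leq_maxr //.
rewrite -big_split /=; apply: ler_sum => i _.
by rewrite coefD ler_normD.
Qed.

Lemma l1N p : l1 (- p) = l1 p.
Proof.
rewrite /l1 size_polyN; apply: eq_bigr => i _.
by rewrite coefN normrN.
Qed.

Lemma l1B p q : l1 (p - q) <= l1 p + l1 q.
Proof. by rewrite -(l1N q) l1D. Qed.

Lemma l1Z (c : R) p : l1 (c *: p) = `|c| * l1 p.
Proof.
rewrite (@l1_widen (c *: p) (size p)) ?size_scale_leq //.
rewrite /l1 mulr_sumr; apply: eq_bigr => i _.
by rewrite coefZ normrM.
Qed.

Lemma l1C (c : R) : l1 c%:P = `|c|.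
Proof.
rewrite (@l1_widen _ 1) ?size_polyC ?leq_b1 //.
by rewrite big_ord1 coefC.
Qed.

Lemma l1MX p : l1 (p * 'X) = l1 p.
Proof.
rewrite (@l1_widen _ (size p).+1); last first.
  by rewrite (leq_trans (size_polyMleq _ _)) // size_polyX addn2.
rewrite big_ord_recl coefMX /= normr0 add0r /l1.
by apply: eq_bigr => i _; rewrite coefMX.
Qed.

Lemma l1XC p c : l1 (p * 'X + c%:P) = l1 p + `|c|.
Proof.
rewrite (@l1_widen _ (size p).+1); last first.
  rewrite (leq_trans (size_polyD _ _)) // geq_max; apply/andP; split.
    by rewrite (leq_trans (size_polyMleq _ _)) // size_polyX addn2.
  by rewrite size_polyC (leq_trans (leq_b1 _)).
rewrite big_ord_recl !coefD coefMX coefC /= add0r addrC /l1.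
congr (_ + _); apply: eq_bigr => i _.
by rewrite coefD coefMX coefC /= addr0.
Qed.

Lemma l1M p q : l1 (p * q) <= l1 p * l1 q.
Proof.
elim/poly_ind: p => [|p c ih]; first by rewrite mul0r /l1 size_poly0 !big_ord0 mul0r.
rewrite l1XC mulrDl mulrDl -mulrA (mulrC 'X) mulrA mul_polyC.
apply: le_trans (l1D _ _) _.
by rewrite l1MX l1Z lerD2r.
Qed.

Lemma l1_poly m (E : nat -> R) c :
  (forall j, (j < m)%N -> `|E j| <= c) -> l1 (\poly_(j < m) E j) <= m%:R * c.
Proof.
move=> hE; rewrite (@l1_widen _ m) ?size_poly //.
apply: le_trans (_ : \sum_(i < m) c <= _); last by rewrite sumr_const card_ord mulr_natl.
apply: ler_sum => i _; rewrite coef_poly ltn_ord; exact: hE.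
Qed.

End L1.

HB.instance Definition _ (R : realType) (m n : nat) := Complete.on 'M[R]_(m, n).

Lemma my_banach (R : realType) n (U : set 'rV[R]_n) (T : 'rV[R]_n -> 'rV[R]_n) (q : R) :
  closed U -> U !=set0 -> (forall v, U v -> U (T v)) -> 0 <= q -> q < 1 ->
  (forall u v, U u -> U v -> `|T u - T v| <= q * `|u - v|) ->
  exists2 v, U v & v = T v.
Proof.
move=> cU neU TU q0 q1 Tl.
pose f := mkfun_fun TU.
have : is_contraction f.
  exists (NngNum q0); split => //=.
  move=> [u v] [/= Uu Uv]; exact: Tl.
move=> ctr; have [v Uv E] := @banach_fixed_point R ('rV[R]_n : completeNormedModType R) U f ctr cU neU.
by exists v.
Qed.

Section Rem.
Variable R : realType.
Implicit Types P H p q : {poly R}.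

Lemma l1M_le p q a b : l1 p <= a -> l1 q <= b -> l1 (p * q) <= a * b.
Proof.
move=> ha hb; apply: le_trans (l1M _ _) _.
by apply: ler_pM => //; apply: l1_ge0.
Qed.

Lemma l1D_le p q a b : l1 p <= a -> l1 q <= b -> l1 (p + q) <= a + b.
Proof. by move=> ha hb; apply: le_trans (l1D _ _) _; apply: lerD. Qed.

Lemma l1_nat k : l1 (k%:R : {poly R}) = k%:R.
Proof. by rewrite -polyC_natr l1C normr_nat. Qed.

Definition Rm P H : {poly R} := 6%:R * P^+2 * H^+2 + 4%:R * P * H^+3 + H^+4.

Lemma expand4 P H : (P + H)^+4 = P^+4 + 4%:R * P^+3 * H + Rm P H.
Proof. rewrite /Rm; ring. Qed.

Lemma Rm0 P : Rm P 0 = 0.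
Proof. by rewrite /Rm !expr0n /= !mulr0 !addr0. Qed.

Lemma Rm_lip P H H' r : l1 P <= 2 -> l1 H <= r -> l1 H' <= r -> r <= 1 ->
  l1 (Rm P H - Rm P H') <= 76 * r * l1 (H - H').
Proof.
move=> hP hH hH' r1.
have r0 : 0 <= r by apply: le_trans (l1_ge0 _) hH.
have -> : Rm P H - Rm P H' = (H - H') * (6%:R*(P*P)*(H+H') + 4%:R*P*(H*H + H*H' + H'*H') + (H+H')*(H*H+H'*H')).
  rewrite /Rm; ring.
rewrite mulrC; apply: l1M_le => //.
have hS : l1 (6%:R*(P*P)*(H+H') + 4%:R*P*(H*H + H*H' + H'*H') + (H+H')*(H*H+H'*H'))
   <= 6 * (2 * 2) * (r + r) + 4 * 2 * (r * r + r * r + r * r) + (r + r) * (r * r + r * r).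
  apply: l1D_le; first apply: l1D_le.
  - apply: l1M_le; last exact: l1D_le.
    apply: l1M_le; first by rewrite l1_nat.
    exact: l1M_le.
  - apply: l1M_le; first apply: l1M_le => //; first by rewrite l1_nat.
    apply: l1D_le; first apply: l1D_le; exact: l1M_le.
  - apply: l1M_le; first exact: l1D_le.
    apply: l1D_le; exact: l1M_le.
apply: le_trans hS _.
have rr : r * r <= r by nra.
have rrr : r * r * r <= r by nra.
nra.
Qed.

End Rem.

Section Hom.
Variable R : realType.
Implicit Types p q : {poly R}.

Definition hom e p (x y : R) := \sum_(k < e.+1) p`_k * x ^+ k * y ^+ (e - k).

Lemma homD e p q x y : hom e (p + q) x y = hom e p x y + hom e q x y.
Proof. by rewrite /hom -big_split; apply: eq_bigr => k _; rewrite coefD !mulrDl. Qed.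

Lemma hom_horner e p x y : (size p <= e.+1)%N -> y != 0 ->
  hom e p x y = y ^+ e * p.[x / y].
Proof.
move=> hp y0; rewrite (horner_coef_wide _ hp) mulr_sumr; apply: eq_bigr => k _.
have hk : (k <= e)%N by rewrite -ltnS.
have -> : y ^+ e = y ^+ (e - k) * y ^+ k by rewrite -exprD subnK.
have yk : y ^+ k != 0 by rewrite expf_neq0.
rewrite expr_div_n; field.
by [].
Qed.

Lemma hom_y0 e p x : hom e p x 0 = p`_e * x ^+ e.
Proof.
rewrite /hom big_ord_recr /= subnn expr0 mulr1 big1 ?add0r // => k _.
by rewrite expr0n subn_eq0 leqNgt ltn_ord /= mulr0.
Qed.

Lemma coefM_top e1 e2 p q : (size p <= e1.+1)%N -> (size q <= e2.+1)%N ->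
  (p * q)`_(e1 + e2) = p`_e1 * q`_e2.
Proof.
move=> hp hq; rewrite coefM.
have he : (e1 < (e1 + e2).+1)%N by rewrite ltnS leq_addr.
rewrite (bigD1 (Ordinal he)) //= addKn big1 ?addr0 // => j hj.
have hj' : val j != e1 by apply: contra hj => /eqP h; apply/eqP/val_inj.
case: (ltngtP j e1) hj' => // h _.
  by rewrite (@nth_default _ _ q) ?mulr0 //; apply: leq_trans hq _; lia.
by rewrite (@nth_default _ _ p) ?mul0r //; apply: leq_trans hp _.
Qed.

Lemma homM e1 e2 p q x y : (size p <= e1.+1)%N -> (size q <= e2.+1)%N ->
  hom (e1 + e2) (p * q) x y = hom e1 p x y * hom e2 q x y.
Proof.
move=> hp hq.
have hpq : (size (p * q)%R <= (e1 + e2).+1)%N.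
  apply: leq_trans (size_polyMleq _ _) _; lia.
have [->|y0] := eqVneq y 0.
  by rewrite !hom_y0 (@coefM_top e1 e2 p q hp hq) exprD; ring.
by rewrite !hom_horner // hornerM exprD; ring.
Qed.

Lemma hom4 d p x y : (size p <= d.+1)%N -> hom (4 * d) (p ^+ 4) x y = (hom d p x y) ^+ 4.
Proof.
move=> hp.
have h2 : (size (p * p)%R <= (d + d).+1)%N by apply: leq_trans (size_polyMleq _ _) _; lia.
have h3 : (size (p * (p * p))%R <= (d + (d + d)).+1)%N
  by apply: leq_trans (size_polyMleq _ _) _; lia.
have -> : (4 * d = d + (d + (d + d)))%N by lia.
have -> : p ^+ 4 = p * (p * (p * p)) by rewrite !exprS expr0 mulr1.
rewrite (homM _ _ hp h3) (homM _ _ hp h2) (homM _ _ hp hp).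
by rewrite !exprS expr0 mulr1.
Qed.

End Hom.

Section Main.
Variable R : realType.
Variable d : nat.
Local Notation n := (4 * d).+1.
Implicit Types v : 'rV[R]_n.

Definition vc v k := v 0 (inord k).
Definition Vp v : {poly R} := \poly_(i < n) vc v i.
Definition hP v : {poly R} := \poly_(j < d) (vc v (2*d + j) / 24).
Definition kP v : {poly R} := \poly_(j < d) (vc v (d + j) / 24).
Definition aP v : {poly R} := \poly_(j < d) ((vc v j - vc v (2*d + j) / 3) / 4).
Definition bP v : {poly R} :=
  \poly_(j < d.+1) ((vc v (3*d + j) - (if (j < d)%N then vc v (d + j) / 3 else 0)) / 4).
Definition Y : {poly R} := 'X^d.

Definition lin v : {poly R} :=
  4%:R * 1^+3 * aP v + 4%:R * Y^+3 * bP v + 4%:R * (1 + Y)^+3 * (hP v + kP v)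
  + 4%:R * (1 - Y)^+3 * (hP v - kP v).

Lemma lin_Vp v : lin v = Vp v.
Proof.
have -> : lin v = (4%:R)%:P * aP v + (8%:R)%:P * hP v + (24%:R)%:P * (Y^+2 * hP v)
   + (24%:R)%:P * (Y * kP v) + (8%:R)%:P * (Y^+3 * kP v) + (4%:R)%:P * (Y^+3 * bP v).
  rewrite !polyC_natr /lin; ring.
rewrite /Y -!exprM; apply/polyP => i.
rewrite !coefD !coefCM !coefXnM !coef_poly.
case: (ltnP i d) => h1; [|case: (ltnP i (d*2)) => h2; [|case: (ltnP i (d*3)) => h3;
   [|case: (ltnP i n) => h4]]];
repeat match goal with |- context [if ?b then _ else _] =>
   (have -> : b = true by lia) || (have -> : b = false by lia) || (case: (boolP b) => ?) end;
repeat match goal with |- context [vc v ?k] =>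
   tryif constr_eq k i then fail else (have -> : k = i by lia) end.
all: rewrite ?mulr0 ?addr0 ?add0r; try (field; done).
Qed.


Local Notation N := (n%:R : R).

Lemma mx_le (A : 'rV[R]_n) i : `|A 0 i| <= `|A|.
Proof.
rewrite (_ : `|A| = mx_norm A) // mx_normrE.
exact: (le_bigmax _ (fun ij : 'I_1 * 'I_n => `|A ij.1 ij.2|) (0, i)).
Qed.

Lemma mx_ub (A : 'rV[R]_n) c : 0 <= c -> (forall i, `|A 0 i| <= c) -> `|A| <= c.
Proof.
move=> c0 h; rewrite (_ : `|A| = mx_norm A) // mx_normrE.
apply/bigmax_leP; split => // -[i j] _ /=; rewrite (ord1 i); exact: h.
Qed.

Lemma vc_le v k : `|vc v k| <= `|v|.
Proof. exact: mx_le. Qed.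

Lemma vcB v w k : vc (v - w) k = vc v k - vc w k.
Proof. by rewrite /vc !mxE. Qed.

Lemma nb_a (x y M : R) : `|x| <= M -> `|y| <= M -> `|(x - y / 3) / 4| <= M.
Proof.
move=> hx hy; rewrite normrM normfV (ger0_norm (_ : 0 <= 4 :> R)) //.
have := ler_normB x (y / 3); rewrite normrM normfV (ger0_norm (_ : 0 <= 3 :> R)) //.
have := normr_ge0 y; lra.
Qed.

Lemma nb_h (y M : R) : `|y| <= M -> `|y / 24| <= M.
Proof.
move=> hy; rewrite normrM normfV (ger0_norm (_ : 0 <= 24 :> R)) //.
have := normr_ge0 y; lra.
Qed.

Definition H3 v := hP v + kP v.
Definition H4 v := hP v - kP v.

Lemma l1_aP v : l1 (aP v) <= N * `|v|.
Proof.
apply: le_trans (l1_poly _) _; first by move=> j _; apply: nb_a; apply: vc_le.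
by apply: ler_wpM2r => //; rewrite ler_nat; lia.
Qed.

Lemma l1_bP v : l1 (bP v) <= N * `|v|.
Proof.
apply: le_trans (l1_poly _) _.
  move=> j _; case: ifP => _; first by apply: nb_a; apply: vc_le.
  rewrite subr0 normrM normfV (ger0_norm (_ : 0 <= 4 :> R)) //.
  have := vc_le v (3*d+j); have := normr_ge0 (vc v (3*d+j)); lra.
by apply: ler_wpM2r => //; rewrite ler_nat; lia.
Qed.

Lemma l1_hP v : l1 (hP v) <= N * `|v|.
Proof.
apply: le_trans (l1_poly _) _; first by move=> j _; apply: nb_h; apply: vc_le.
by apply: ler_wpM2r => //; rewrite ler_nat; lia.
Qed.

Lemma l1_kP v : l1 (kP v) <= N * `|v|.
Proof.
apply: le_trans (l1_poly _) _; first by move=> j _; apply: nb_h; apply: vc_le.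
by apply: ler_wpM2r => //; rewrite ler_nat; lia.
Qed.


Lemma aPB v w : aP (v - w) = aP v - aP w.
Proof.
apply/polyP => j; rewrite coefB !coef_poly; case: ifP => _; last by rewrite subr0.
by rewrite !vcB; field.
Qed.

Lemma bPB v w : bP (v - w) = bP v - bP w.
Proof.
apply/polyP => j; rewrite coefB !coef_poly; case: ifP => _; last by rewrite subr0.
by rewrite !vcB; case: ifP => _; field.
Qed.

Lemma hPB v w : hP (v - w) = hP v - hP w.
Proof.
apply/polyP => j; rewrite coefB !coef_poly; case: ifP => _; last by rewrite subr0.
by rewrite !vcB; field.
Qed.

Lemma kPB v w : kP (v - w) = kP v - kP w.
Proof.
apply/polyP => j; rewrite coefB !coef_poly; case: ifP => _; last by rewrite subr0.
by rewrite !vcB; field.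
Qed.

Lemma H3B v w : H3 (v - w) = H3 v - H3 w.
Proof. rewrite /H3 hPB kPB; ring. Qed.
Lemma H4B v w : H4 (v - w) = H4 v - H4 w.
Proof. rewrite /H4 hPB kPB; ring. Qed.

Lemma l1_H3 v : l1 (H3 v) <= 2 * N * `|v|.
Proof.
apply: le_trans (l1D _ _) _; have := l1_hP v; have := l1_kP v; lra.
Qed.

Lemma l1_H4 v : l1 (H4 v) <= 2 * N * `|v|.
Proof.
apply: le_trans (l1B _ _) _; have := l1_hP v; have := l1_kP v; lra.
Qed.

Definition G v := Rm 1 (aP v) + Rm Y (bP v) + Rm (1 + Y) (H3 v) + Rm (1 - Y) (H4 v).
Definition f0p : {poly R} := 1 ^+ 4 + Y ^+ 4 + (1 + Y) ^+ 4 + (1 - Y) ^+ 4.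

Lemma sum4 v : (1 + aP v)^+4 + (Y + bP v)^+4 + ((1 + Y) + H3 v)^+4 + ((1 - Y) + H4 v)^+4
  = f0p + Vp v + G v.
Proof.
rewrite (expand4 1 (aP v)) (expand4 Y (bP v)) (expand4 (1 + Y) (H3 v)) (expand4 (1 - Y) (H4 v)).
by rewrite -lin_Vp /lin /G /f0p /H3 /H4; ring.
Qed.

Lemma G0 : G 0 = 0.
Proof.
rewrite /G.
have -> : aP 0 = 0 by rewrite -(subrr 0) aPB subrr.
have -> : bP 0 = 0 by rewrite -(subrr 0) bPB subrr.
have -> : H3 0 = 0 by rewrite -(subrr 0) H3B subrr.
have -> : H4 0 = 0 by rewrite -(subrr 0) H4B subrr.
by rewrite !Rm0 !addr0.
Qed.

Lemma l1_1 : l1 (1 : {poly R}) = 1.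
Proof. by rewrite -polyC1 l1C normr1. Qed.

Lemma l1_Y : l1 Y = 1.
Proof.
rewrite /l1 /Y size_polyXn big_ord_recr /= coefXn eqxx normr1 big1 ?add0r // => i _.
by rewrite coefXn (ltn_eqF (ltn_ord i)) normr0.
Qed.

Lemma G_lip v w rho : `|v| <= rho -> `|w| <= rho -> 2 * N * rho <= 1 ->
  l1 (G v - G w) <= 76 * (2 * N * rho) * (8 * N) * `|v - w|.
Proof.
move=> hv hw hr.
have N0 : 0 <= N by [].
have r0 : 0 <= rho by apply: le_trans hv.
have K1 : N * `|v| <= 2 * N * rho by nra.
have K2 : N * `|w| <= 2 * N * rho by nra.
have K3 : 2 * N * `|v| <= 2 * N * rho by nra.
have K4 : 2 * N * `|w| <= 2 * N * rho by nra.
set r := 2 * N * rho.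
have -> : G v - G w = (Rm 1 (aP v) - Rm 1 (aP w)) + (Rm Y (bP v) - Rm Y (bP w))
   + (Rm (1 + Y) (H3 v) - Rm (1 + Y) (H3 w)) + (Rm (1 - Y) (H4 v) - Rm (1 - Y) (H4 w)).
  by rewrite /G; ring.
have P1 : l1 (1 : {poly R}) <= 2 by rewrite l1_1; lra.
have P2 : l1 Y <= 2 by rewrite l1_Y; lra.
have P3 : l1 (1 + Y) <= 2 by apply: le_trans (l1D _ _) _; rewrite l1_1 l1_Y; lra.
have P4 : l1 (1 - Y) <= 2 by apply: le_trans (l1B _ _) _; rewrite l1_1 l1_Y; lra.
have e1 := Rm_lip P1 (le_trans (l1_aP v) K1) (le_trans (l1_aP w) K2) hr.
have e2 := Rm_lip P2 (le_trans (l1_bP v) K1) (le_trans (l1_bP w) K2) hr.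
have e3 := Rm_lip P3 (le_trans (l1_H3 v) K3) (le_trans (l1_H3 w) K4) hr.
have e4 := Rm_lip P4 (le_trans (l1_H4 v) K3) (le_trans (l1_H4 w) K4) hr.
rewrite -aPB in e1; rewrite -bPB in e2; rewrite -H3B in e3; rewrite -H4B in e4.
have f1 := l1_aP (v - w); have f2 := l1_bP (v - w); have f3 := l1_H3 (v - w); have f4 := l1_H4 (v - w).
have r0' : 0 <= 76 * r by rewrite mulr_ge0 // /r !mulr_ge0.
have g1 := ler_wpM2l r0' f1; have g2 := ler_wpM2l r0' f2.
have g3 := ler_wpM2l r0' f3; have g4 := ler_wpM2l r0' f4.
apply: le_trans (l1D _ _) _; apply: le_trans (lerD (l1D _ _) (lexx _)) _.
apply: le_trans (lerD (lerD (l1D _ _) (lexx _)) (lexx _)) _.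
set A := 76 * r in r0' g1 g2 g3 g4 e1 e2 e3 e4 *.
set X := N * `|v - w| in g1 g2 f1 f2 *.
have -> : A * (8 * N) * `|v - w| = A * (8 * X) by rewrite /X; ring.
have E1 : A * (2 * N * `|v - w|) = 2 * (A * X) by rewrite /X; ring.
rewrite E1 in g3 g4.
have -> : A * (8 * X) = 8 * (A * X) by ring.
have : 0 <= A * X by apply: mulr_ge0 => //; apply: mulr_ge0.
move: (A * X) g1 g2 g3 g4 => Z g1 g2 g3 g4 Z0.
lra.
Qed.
Implicit Types (p q g : {poly R}).

Definition Cf (p : {poly R}) : 'rV[R]_n := \row_(i < n) p`_i.
Definition Cd (p : {poly R}) : 'rV[R]_d.+1 := \row_(i < d.+1) p`_i.

Lemma Cf_le p : `|Cf p| <= l1 p.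
Proof. by apply: mx_ub; [apply: l1_ge0 | move=> i; rewrite mxE l1_coef]. Qed.

Lemma CfB p q : Cf (p - q) = Cf p - Cf q.
Proof. by apply/rowP => i; rewrite !mxE coefB. Qed.

Lemma VpB v w : Vp (v - w) = Vp v - Vp w.
Proof.
apply/polyP => i; rewrite coefB !coef_poly; case: ifP => _; last by rewrite subr0.
by rewrite vcB.
Qed.

Lemma Vp_Cf g : (size g <= n)%N -> Vp (Cf g) = g.
Proof.
move=> hg; apply/polyP => i; rewrite coef_poly; case: ifP => hi.
  by rewrite /vc mxE inordK.
by rewrite nth_default //; apply: leq_trans hg _; lia.
Qed.

Lemma sizeD_le (p q : {poly R}) m : (size p <= m)%N -> (size q <= m)%N -> (size (p + q)%R <= m)%N.
Proof. by move=> hp hq; apply: leq_trans (size_polyD _ _) _; rewrite geq_max hp hq. Qed.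

Lemma sizeB_le (p q : {poly R}) m : (size p <= m)%N -> (size q <= m)%N -> (size (p - q)%R <= m)%N.
Proof. by move=> hp hq; apply: sizeD_le; rewrite ?size_polyN. Qed.

Lemma size4 (p : {poly R}) : (size p <= d.+1)%N -> (size (p ^+ 4) <= n)%N.
Proof. move=> hp; apply: leq_trans (size_poly_exp_leq _ _) _; lia. Qed.

Lemma size_Y : (size Y <= d.+1)%N. Proof. by rewrite size_polyXn. Qed.
Lemma size_1 : (size (1%R : {poly R}) <= d.+1)%N. Proof. by rewrite size_poly1. Qed.
Lemma size_aP v : (size (aP v) <= d.+1)%N. Proof. exact: leq_trans (size_poly _ _) _. Qed.
Lemma size_bP v : (size (bP v) <= d.+1)%N. Proof. exact: size_poly. Qed.
Lemma size_H3 v : (size (H3 v) <= d.+1)%N.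
Proof. by apply: sizeD_le; apply: leq_trans (size_poly _ _) _. Qed.
Lemma size_H4 v : (size (H4 v) <= d.+1)%N.
Proof. by apply: sizeB_le; apply: leq_trans (size_poly _ _) _. Qed.

Definition pp v : seq {poly R} := [:: 1 + aP v; Y + bP v; (1 + Y) + H3 v; (1 - Y) + H4 v].

Lemma size_pp v i : (size (nth 0%R (pp v) i) <= d.+1)%N.
Proof.
case: i => [|[|[|[|i]]]] /=.
- by apply: sizeD_le; [apply: size_1 | apply: size_aP].
- by apply: sizeD_le; [apply: size_Y | apply: size_bP].
- by apply: sizeD_le; [apply: sizeD_le; [apply: size_1 | apply: size_Y] | apply: size_H3].
- by apply: sizeB_le (sizeD_le _ _) _ => //; [apply: size_1|apply: size_Y| apply: size_H4] || (apply: sizeD_le; [apply: sizeB_le; [apply: size_1 | apply: size_Y] | apply: size_H4]).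
- by rewrite nth_nil size_poly0.
Qed.

Lemma size_f0p : (size f0p <= n)%N.
Proof.
  rewrite /f0p; apply: sizeD_le; [apply: sizeD_le; [apply: sizeD_le|]|]; apply: size4.
  + exact: size_1.
  + exact: size_Y.
  + by apply: sizeD_le; [apply: size_1|apply: size_Y].
  + by apply: sizeB_le; [apply: size_1|apply: size_Y].
Qed.

Lemma size_G v : (size (G v) <= n)%N.
Proof.
have -> : G v = (1 + aP v)^+4 + (Y + bP v)^+4 + ((1 + Y) + H3 v)^+4 + ((1 - Y) + H4 v)^+4
   - f0p - Vp v by rewrite sum4; ring.
have s i := size4 (size_pp v i).
apply: sizeB_le; last exact: size_poly.
apply: sizeB_le; last exact: size_f0p.
apply: sizeD_le; [apply: sizeD_le; [apply: sizeD_le|]|].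
+ exact: (s 0%N).
+ exact: (s 1%N).
+ exact: (s 2%N).
+ exact: (s 3%N).
Qed.

Lemma bform_Cd p x y : bform_eval R d (Cd p) x y = hom d p x y.
Proof. by rewrite /bform_eval /hom; apply: eq_bigr => k _; rewrite mxE. Qed.

Lemma bform_Vp (f : 'rV[R]_n) x y : bform_eval R (4 * d) f x y = hom (4 * d) (Vp f) x y.
Proof.
rewrite /bform_eval /hom; apply: eq_bigr => k _.
by rewrite coef_poly ltn_ord /vc inord_val.
Qed.

Lemma main_nbhs : exists f0 : 'rV[R]_n, nbhs f0 (len4_le4 R d).
Proof.
pose rho : R := (2432 * N ^+ 2)^-1.
have N1 : 1 <= N by rewrite ler1n.
have Npos : 0 < N by apply: lt_le_trans N1.
have c0 : (0 : R) < 2432 by rewrite ltr0n.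
have D0 : 0 < 2432 * N ^+ 2 by apply: mulr_gt0 c0 (exprn_gt0 _ Npos).
have E1 : 2432 * N ^+ 2 * rho = 1 by rewrite /rho mulfV ?gt_eqF.
have rho0 : 0 < rho by rewrite invr_gt0.
have hrN : 2 * N * rho <= 1.
  rewrite -[X in _ <= X]E1; apply: ler_wpM2r; first exact: ltW.
  rewrite expr2 mulrA; apply: ler_wpM2r; first exact: ltW.
  lra.
have Eq : 76 * (2 * N * rho) * (8 * N) = 1 / 2.
  have -> : 76 * (2 * N * rho) * (8 * N) = (2432 * N ^+ 2 * rho) / 2 by field.
  by rewrite E1.
exists (Cf f0p).
apply/nbhs_ballP; exists (rho / 2); first by rewrite /= divr_gt0.
move=> f; rewrite -ball_normE /= => hf.
set w := f - Cf f0p.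
have hw : `|w| <= rho / 2 by rewrite /w distrC ltW.
pose T v := w - Cf (G v).
have lipT u v : `|u| <= rho -> `|v| <= rho -> `|T u - T v| <= 1 / 2 * `|u - v|.
  move=> hu hv.
  have -> : T u - T v = Cf (G v - G u) by rewrite CfB /T opprB addrC addrA subrK.
  apply: le_trans (Cf_le _) _; rewrite (distrC u) -Eq.
  exact: G_lip.
have TU v : `|v| <= rho -> `|T v| <= rho.
  move=> hv; apply: le_trans (ler_normB _ _) _.
  have : `|Cf (G v)| <= 1 / 2 * `|v|.
    have h0 : `|0 : 'rV[R]_n| <= rho by rewrite normr0; apply: ltW.
    have h := G_lip hv h0 hrN; rewrite G0 !subr0 in h.
    by apply: le_trans (Cf_le _) _; rewrite -Eq.
  have := normr_ge0 v; lra.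
pose U := [set v : 'rV[R]_n | `|v| <= rho].
have cU : closed U.
  have -> : U = closed_ball_ Num.Def.normr (0 : 'rV[R]_n) rho.
    by apply/seteqP; split => v /=; rewrite /closed_ball_ /= sub0r normrN.
  by rewrite -closed_ballE //; apply: closed_ball_closed.
have U0 : U !=set0 by exists 0; rewrite /U /= normr0 ltW.
have h12 : (0:R) <= 1/2 by lra.
have h12' : (1/2:R) < 1 by lra.
have [v Uv Ev] := @my_banach R n U T (1/2) cU U0 TU h12 h12' lipT.
exists (fun i : 'I_4 => Cd (nth 0 (pp v) i)) => x y.
have Vf : Vp f = Vp w + f0p by rewrite /w VpB Vp_Cf ?size_f0p //; ring.
have Vv : Vp v = Vp w - G v by rewrite {1}Ev /T VpB Vp_Cf ?size_G.
rewrite bform_Vp.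
have -> : Vp f = (1 + aP v)^+4 + (Y + bP v)^+4 + ((1 + Y) + H3 v)^+4 + ((1 - Y) + H4 v)^+4.
  by rewrite sum4 Vv Vf; ring.
rewrite !homD.
rewrite !big_ord_recr big_ord0 /= add0r !bform_Cd.
rewrite !hom4 //.
- exact: (size_pp v 3).
- exact: (size_pp v 2).
- exact: (size_pp v 1).
- exact: (size_pp v 0).
Qed.
End Main.

Unset Implicit Arguments.

Theorem mainTheorem8 (R : realType) (d : nat) :
  (1 <= d)%N -> (len4_le4 R d)° !=set0.
Proof.
move=> _; have [f0 h] := main_nbhs R d.
by exists f0.
Qed.
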